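(* Let $S$ be an $\omega$-cocontinuous $M$-module. For all $M$-wGCL programs $C$, the transformer $\mathsf{wlp}[C]$ is a well-defined $\omega$-cocontinuous endofunction on the module of weightings over $S$. In particular, if $\Phi_f$ is the $\mathsf{wlp}$-characteristic function of $\mathtt{while}(\varphi)\{C\}$ with respect to postweighting $f$, i.e.\ $\Phi_f(X) = [\neg\varphi]\cdot f \oplus [\varphi]\cdot \mathsf{wlp}[C](X)$, then \[ \mathsf{wlp}[\mathtt{while}(\varphi)\{C\}](f) \;=\; \bigwedge_{i \in \mathbb{N}} \Phi_f^i(\top), \] where $\bigwedge$ denotes the infimum (meet) with respect to the natural order and $\top$ is the greatest element of the module of weightings.
   Context: $M=(M,\odot,1)$ is a monoid of weights. An $M$-module $S$ is a commutative monoid $(S,\oplus,\mathbf{0})$ with an associative, distributive left action (scalar multiplication) $\otimes\colon M\times S\to S$ such that $1\otimes a=a$ and $v\otimes\mathbf{0}=\mathbf{0}$. The natural order is $a\preceq b$ iff $\exists c:\ a\oplus c=b$. $S$ is $\omega$-cocontinuous if the reversed natural order is a pointed $\omega$-cpo (so a greatest element $\top$ exists and infima of decreasing chains exist) and $\oplus$, $\otimes$ are $\omega$-continuous with respect to it. Weightings are functions $f\colon\Sigma\to S$ from program states to $S$, with operations, order, $\top$ and meets lifted pointwise. wGCL programs are built from assignments $x:=E$, sequential composition $C_1;C_2$, conditionals $\mathtt{if}(\varphi)\{C_1\}\mathtt{else}\{C_2\}$, branching $\{C_1\}\oplus\{C_2\}$, weighting statements $\odot a$ with $a\in M$, and loops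 $\mathtt{while}(\varphi)\{C\}$. For a predicate $\varphi$, $([\varphi]\cdot f)(\sigma)=f(\sigma)$ if $\sigma\models\varphi$ and $\mathbf{0}$ otherwise. The weakest liberal preweighting transformer $\mathsf{wlp}$ is defined inductively: $\mathsf{wlp}[x:=E](f)=f[x/E]$; $\mathsf{wlp}[C_1;C_2](f)=\mathsf{wlp}[C_1](\mathsf{wlp}[C_2](f))$; $\mathsf{wlp}[\mathtt{if}(\varphi)\{C_1\}\mathtt{else}\{C_2\}](f)=[\varphi]\cdot\mathsf{wlp}[C_1](f)\oplus[\neg\varphi]\cdot\mathsf{wlp}[C_2](f)$; $\mathsf{wlp}[\{C_1\}\oplus\{C_2\}](f)=\mathsf{wlp}[C_1](f)\oplus\mathsf{wlp}[C_2](f)$; $\mathsf{wlp}[\odot a](f)=a\otimes f$; and $\mathsf{wlp}[\mathtt{while}(\varphi)\{C\}](f)$ is the greatest fixed point of $\Phi_f$. *)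

(* Defs.v *)
From Stdlib Require Import ClassicalEpsilon.

Set Implicit Arguments.

Record monoid := Monoid {
  mcar :> Type;
  mop : mcar -> mcar -> mcar;
  mone : mcar;
  mop_assoc : forall a b c, mop a (mop b c) = mop (mop a b) c;
  mop_1l : forall a, mop mone a = a;
  mop_1r : forall a, mop a mone = a
}.

Record module (M : monoid) := Module {
  scar :> Type;
  splus : scar -> scar -> scar;
  szero : scar;
  splus_assoc : forall a b c, splus a (splus b c) = splus (splus a b) c;
  splus_comm : forall a b, splus a b = splus b a;
  splus_0l : forall a, splus szero a = a;
  act : mcar M -> scar -> scar;
  act_assoc : forall (u v : mcar M) a, act (mop M u v) a = act u (act v a);
  act_distr : forall (v : mcar M) a b, act v (splus a b) = splus (act v a) (act v b);
  act_1 : forall a, act (mone M) a = a;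
  act_0 : forall v : mcar M, act v szero = szero
}.

Arguments splus {M} m _ _.
Arguments szero {M} m.
Arguments act {M} m _ _.

Section Order.
Variables (M : monoid) (Sm : module M).

Definition nle (a b : Sm) : Prop := exists c, splus Sm a c = b.

Definition ndecreasing (ch : nat -> Sm) : Prop := forall i, nle (ch (Datatypes.S i)) (ch i).

Definition is_inf (ch : nat -> Sm) (l : Sm) : Prop :=
  (forall i, nle l (ch i)) /\ (forall m, (forall i, nle m (ch i)) -> nle m l).

(** ω-cocontinuity: the reversed natural order is a pointed ω-cpo
    (partial order with greatest element and infima of decreasing chains),
    and ⊕, ⊗ are ω-continuous w.r.t. it. *)
Definition omega_cocontinuous_module : Prop :=
  (forall a, nle a a) /\
  (forall a b c, nle a b -> nle b c -> nle a c) /\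
  (forall a b, nle a b -> nle b a -> a = b) /\
  (exists top : Sm, forall a, nle a top) /\
  (forall ch, ndecreasing ch -> exists l, is_inf ch l) /\
  (forall cha chb la lb, ndecreasing cha -> ndecreasing chb ->
      is_inf cha la -> is_inf chb lb ->
      is_inf (fun i => splus Sm (cha i) (chb i)) (splus Sm la lb)) /\
  (forall (v : mcar M) ch l, ndecreasing ch -> is_inf ch l ->
      is_inf (fun i => act Sm v (ch i)) (act Sm v l)).
End Order.

Definition state (V : Type) := nat -> V.

Definition upd (V : Type) (s : state V) (x : nat) (v : V) : state V :=
  fun y => if Nat.eqb y x then v else s y.

Inductive wgcl (M : monoid) (V : Type) : Type :=
| Assign : nat -> (state V -> V) -> wgcl M V
| Seq : wgcl M V -> wgcl M V -> wgcl M V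
| Ite : (state V -> bool) -> wgcl M V -> wgcl M V -> wgcl M V
| Branch : wgcl M V -> wgcl M V -> wgcl M V
| Weight : mcar M -> wgcl M V
| While : (state V -> bool) -> wgcl M V -> wgcl M V.

Arguments Assign {M V} _ _.
Arguments Seq {M V} _ _.
Arguments Ite {M V} _ _ _.
Arguments Branch {M V} _ _.
Arguments Weight {M V} _.
Arguments While {M V} _ _.

Section Weightings.
Variables (M : monoid) (V : Type) (Sm : module M).

Definition weighting := state V -> Sm.

Definition wle (f g : weighting) : Prop := forall s, nle Sm (f s) (g s).
Definition wdecreasing (ch : nat -> weighting) : Prop := forall i, wle (ch (Datatypes.S i)) (ch i).
Definition wis_inf (ch : nat -> weighting) (l : weighting) : Prop :=
  forall s, is_inf Sm (fun i => ch i s) (l s).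

Definition w_cocontinuous (F : weighting -> weighting) : Prop :=
  forall ch l, wdecreasing ch -> wis_inf ch l -> wis_inf (fun i => F (ch i)) (F l).

Definition iverson (phi : state V -> bool) (f : weighting) : weighting :=
  fun s => if phi s then f s else szero Sm.

Definition wplus (f g : weighting) : weighting := fun s => splus Sm (f s) (g s).

Definition is_gfp (F : weighting -> weighting) (g : weighting) : Prop :=
  F g = g /\ (forall h, F h = h -> wle h g).

(** The greatest fixed point, chosen classically if it exists. *)
Definition gfp (F : weighting -> weighting) : weighting :=
  epsilon (inhabits (fun _ => szero Sm)) (is_gfp F).

Definition charfun (phi : state V -> bool) (body : weighting -> weighting)
  (f : weighting) (X : weighting) : weighting :=
  wplus (iverson (fun s => negb (phi s)) f) (iverson phi (body X)).

Fixpoint wlp (C : wgcl M V) (f : weighting) {struct C} : weighting :=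
  match C with
  | Assign x E => fun s => f (upd s x (E s))
  | Seq C1 C2 => wlp C1 (wlp C2 f)
  | Ite phi C1 C2 => wplus (iverson phi (wlp C1 f))
                           (iverson (fun s => negb (phi s)) (wlp C2 f))
  | Branch C1 C2 => wplus (wlp C1 f) (wlp C2 f)
  | Weight a => fun s => act Sm a (f s)
  | While phi C' => gfp (charfun phi (wlp C') f)
  end.

Fixpoint iter (n : nat) (F : weighting -> weighting) (x : weighting) : weighting :=
  match n with O => x | Datatypes.S k => F (iter k F x) end.
End Weightings.

Arguments wlp {M V} Sm C f.
Arguments weighting {M} V Sm.
Arguments charfun {M V Sm} phi body f X.
Arguments iter {M V Sm} n F x.
Arguments is_gfp {M V Sm} F g.
Arguments wis_inf {M V Sm} ch l.
Arguments w_cocontinuous {M V Sm} F.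
Arguments nle {M} Sm a b.

(* Main.v *)
Require Import Defs.
From Stdlib Require Import ClassicalEpsilon FunctionalExtensionality Arith Lia.

Section Proofs.
Variables (M : monoid) (V : Type) (S : module M).
Variable refl : forall a : S, nle S a a.
Variable trans : forall a b c : S, nle S a b -> nle S b c -> nle S a c.
Variable antisym : forall a b : S, nle S a b -> nle S b a -> a = b.
Variable plus_cont : forall (cha chb : nat -> S) la lb, ndecreasing S cha -> ndecreasing S chb ->
      is_inf S cha la -> is_inf S chb lb ->
      is_inf S (fun i => splus S (cha i) (chb i)) (splus S la lb).
Variable inf_ex : forall ch : nat -> S, ndecreasing S ch -> exists l, is_inf S ch l.
Variable act_cont : forall (v : mcar M) ch l, ndecreasing S ch -> is_inf S ch l ->
      is_inf S (fun i => act S v (ch i)) (act S v l).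

Notation W := (weighting V S).

Lemma inf_unique ch l1 l2 : is_inf S ch l1 -> is_inf S ch l2 -> l1 = l2.
Proof. intros [A B] [C D]. apply antisym; auto. Qed.

Lemma inf_const a : is_inf S (fun _ => a) a.
Proof. split; auto. intros m Hm; apply (Hm 0). Qed.

Lemma wle_refl (f : W) : wle f f.
Proof. intro s; apply refl. Qed.

Lemma wle_trans (f g h : W) : wle f g -> wle g h -> wle f h.
Proof. intros A B s; eauto. Qed.

Lemma w_ext (f g : W) : wle f g -> wle g f -> f = g.
Proof. intros A B; apply functional_extensionality; intro s; apply antisym; auto. Qed.

Lemma decr_le (ch : nat -> S) : ndecreasing S ch -> forall i j, i <= j -> nle S (ch j) (ch i).
Proof.
  intros D i j H; induction H; [apply refl|]. eapply trans; [apply D|exact IHle].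
Qed.

Lemma inf_shift ch l : ndecreasing S ch -> is_inf S ch l -> is_inf S (fun i => ch (Datatypes.S i)) l.
Proof.
  intros D [A B]; split; [intro i; apply A|].
  intros m Hm; apply B; intro i; destruct i.
  - eapply trans; [apply (Hm 0)|apply D].
  - eapply trans; [apply (Hm i)|apply refl].
Qed.

Lemma plus_mono a b c d : nle S a b -> nle S c d -> nle S (splus S a c) (splus S b d).
Proof.
  intros [x Hx] [y Hy]; exists (splus S x y); subst.
  rewrite <- !splus_assoc. f_equal. rewrite (splus_comm _ c), <- splus_assoc. f_equal.
  apply splus_comm.
Qed.

Lemma cocont_mono (F : W -> W) : w_cocontinuous F -> forall f g, wle f g -> wle (F f) (F g).
Proof.
  intros HF f g Hfg.
  set (ch := fun i : nat => match i with 0 => g | _ => f end).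
  assert (Hd : wdecreasing ch).
  { intros i s; destruct i; simpl; [apply Hfg|apply refl]. }
  assert (Hi : wis_inf ch f).
  { intro s; split.
    - intro i; destruct i; simpl; [apply Hfg|apply refl].
    - intros m Hm; apply (Hm 1). }
  intro s; destruct (HF ch f Hd Hi s) as [A _]; apply (A 0).
Qed.

Lemma cocont_decr (F : W -> W) : w_cocontinuous F -> forall ch, wdecreasing ch -> wdecreasing (fun i => F (ch i)).
Proof. intros HF ch D i; apply (@cocont_mono _ HF); apply D. Qed.

Lemma iverson_mono phi (f g : W) : wle f g -> wle (iverson phi f) (iverson phi g).
Proof. intros H s; unfold iverson; destruct (phi s); auto. Qed.

Lemma wplus_mono (f g f' g' : W) : wle f g -> wle f' g' -> wle (wplus f f') (wplus g g').
Proof. intros A B s; apply plus_mono; auto. Qed.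

Lemma iverson_decr phi (ch : nat -> W) : wdecreasing ch -> wdecreasing (fun i => iverson phi (ch i)).
Proof. intros D i; apply iverson_mono, D. Qed.

Lemma iverson_cont phi (ch : nat -> W) l : wis_inf ch l -> wis_inf (fun i => iverson phi (ch i)) (iverson phi l).
Proof. intros H s; unfold iverson; destruct (phi s); [apply H|apply inf_const]. Qed.

Lemma wplus_cont (cha chb : nat -> W) la lb : wdecreasing cha -> wdecreasing chb ->
  wis_inf cha la -> wis_inf chb lb -> wis_inf (fun i => wplus (cha i) (chb i)) (wplus la lb).
Proof. intros A B C D s; unfold wplus; apply plus_cont; auto; intro i; [apply A|apply B]. Qed.

Lemma wplus_decr (cha chb : nat -> W) : wdecreasing cha -> wdecreasing chb -> wdecreasing (fun i => wplus (cha i) (chb i)).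
Proof. intros A B i; apply wplus_mono; auto. Qed.

Variable phi : state V -> bool.
Variable B : W -> W.
Variable HB : w_cocontinuous B.
Variable top : S.
Variable Htop : forall a : S, nle S a top.

Definition Phi f X := charfun phi B f X.

Lemma Phi_mono f f' X X' : wle f f' -> wle X X' -> wle (Phi f X) (Phi f' X').
Proof.
  intros A C; unfold Phi, charfun; apply wplus_mono; apply iverson_mono; auto.
  apply (@cocont_mono _ HB); auto.
Qed.

Lemma Phi_cont fs f Xs X : wdecreasing fs -> wis_inf fs f -> wdecreasing Xs -> wis_inf Xs X ->
  wis_inf (fun i => Phi (fs i) (Xs i)) (Phi f X).
Proof.
  intros A C D E; unfold Phi, charfun.
  apply wplus_cont; try apply iverson_decr; try apply iverson_cont; auto.
  - apply cocont_decr; auto.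
Qed.

Definition K f n : W := iter n (Phi f) (fun _ => top).

Lemma K_decr f : wdecreasing (fun n => K f n).
Proof.
  intro n; induction n; simpl.
  - intro s; apply Htop.
  - apply Phi_mono; [apply wle_refl|exact IHn].
Qed.

Lemma K_mono f f' n : wle f f' -> wle (K f n) (K f' n).
Proof.
  intro H; induction n; simpl; [apply wle_refl|]. apply Phi_mono; auto.
Qed.

Lemma K_inf_ex f : exists L : W, wis_inf (fun n => K f n) L.
Proof.
  assert (H : forall s, exists l, is_inf S (fun n => K f n s) l).
  { intro s. apply inf_ex. intro n; apply K_decr. }
  exists (fun s => proj1_sig (constructive_indefinite_description _ (H s))).
  intro s; exact (proj2_sig (constructive_indefinite_description _ (H s))).
Qed.

Lemma K_gfp f L : wis_inf (fun n => K f n) L -> is_gfp (Phi f) L.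
Proof.
  intro HL; split.
  - apply functional_extensionality; intro s.
    assert (H1 : wis_inf (fun n => Phi f (K f n)) (Phi f L)).
    { apply Phi_cont; auto.
      + intros i s'; apply refl.
      + intro s'; apply inf_const.
      + apply K_decr. }
    eapply inf_unique; [apply (H1 s)|].
    change (is_inf S (fun n => K f (Datatypes.S n) s) (L s)).
    apply (@inf_shift (fun n => K f n s) (L s)); [intro i; apply K_decr|apply HL].
  - intros h Hh.
    assert (Hn : forall n, wle h (K f n)).
    { induction n; simpl.
      - intro s; apply Htop.
      - rewrite <- Hh. apply Phi_mono; [apply wle_refl|exact IHn]. }
    intro s; apply (HL s). intro i; apply Hn.
Qed.

Lemma gfp_eq f L : wis_inf (fun n => K f n) L -> gfp (Phi f) = L.
Proof.
  intro HL. pose proof (@K_gfp f L HL) as G.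
  assert (G' : is_gfp (Phi f) (gfp (Phi f))).
  { unfold gfp. apply epsilon_spec. exists L; exact G. }
  apply w_ext; [apply G; apply G'|apply G'; apply G].
Qed.

Lemma gfp_inf f : wis_inf (fun n => K f n) (gfp (Phi f)).
Proof. destruct (K_inf_ex f) as [L HL]. rewrite (@gfp_eq f L HL). exact HL. Qed.

Lemma While_cont : w_cocontinuous (fun f => gfp (Phi f)).
Proof.
  intros fs f D Hi.
  assert (Kcol : forall n, wis_inf (fun i => K (fs i) n) (K f n)).
  { induction n; simpl.
    - intro s; apply inf_const.
    - apply Phi_cont; auto. intros i; apply K_mono; apply D. }
  intro s; split.
  - intro i. apply (proj2 (gfp_inf (fs i) s)). intro n.
    eapply trans; [apply (proj1 (gfp_inf f s))|]. apply (proj1 (Kcol n s)).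
  - intros m Hm. apply (proj2 (gfp_inf f s)). intro n. apply (proj2 (Kcol n s)). intro i.
    eapply trans; [apply Hm|]. apply (proj1 (gfp_inf (fs i) s)).
Qed.

End Proofs.

Theorem mainTheorem4 (M : monoid) (V : Type) (S : module M)
  (HS : omega_cocontinuous_module S) :
  (forall C : wgcl M V, w_cocontinuous (wlp S C)) /\
  (forall (phi : state V -> bool) (C : wgcl M V) (f : weighting V S),
     is_gfp (charfun phi (wlp S C) f) (wlp S (While phi C) f) /\
     (forall top : S, (forall a : S, nle S a top) ->
        wis_inf (fun i => iter i (charfun phi (wlp S C) f) (fun _ => top))
                (wlp S (While phi C) f))).
Proof.
  destruct HS as (refl & trans & antisym & [top Htop] & infex & pc & ac).
  assert (Hc : forall C : wgcl M V, w_cocontinuous (wlp S C)).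
  { induction C; simpl.
    - intros ch l D Hi s; apply Hi.
    - intros ch l D Hi. apply IHC1; [eapply cocont_decr; eauto|apply IHC2; auto].
    - intros ch l D Hi. apply wplus_cont; auto.
      + apply iverson_decr; auto. eapply cocont_decr; eauto.
      + apply iverson_decr; auto. eapply cocont_decr; eauto.
      + apply iverson_cont; auto.
      + apply iverson_cont; auto.
    - intros ch l D Hi. apply wplus_cont; auto; eapply cocont_decr; eauto.
    - intros ch l D Hi s; apply ac; [intro i; apply D|apply Hi].
    - exact (@While_cont M V S refl trans antisym pc infex b (wlp S C) IHC top Htop). }
  split; [exact Hc|].
  intros phi C f; split.
  - exact (@K_gfp M V S refl trans antisym pc phi (wlp S C) (Hc C) top Htop f _
             (@gfp_inf M V S refl trans antisym pc infex phi (wlp S C) (Hc C) top Htop f)).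
  - intros top' Htop'.
    exact (@gfp_inf M V S refl trans antisym pc infex phi (wlp S C) (Hc C) top' Htop' f).
Qed.
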